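(* Let $\Gamma\subseteq\mathbb{R}$ be the value group of a field $\mathcal{K}$ with a nontrivial valuation. For any function $w:2^{[n]}\to\mathbb{R}$ there exist $\lambda=(\lambda_0,\dots,\lambda_n)\in\Gamma^{n+1}$ such that the function $\lambda\cdot w$, $(\lambda\cdot w)(S)=\lambda_{|S|}+w(S)$, is strictly submodular. Moreover, if $w$ is submodular and $\Gamma$ is dense in $\mathbb{R}$, then such $\lambda$ can be chosen arbitrarily small.
   Context: $\Gamma=\mathrm{val}(\mathcal{K}^* )$, a nontrivial additive subgroup of $\mathbb{R}$. A function $F:2^{[n]}\to\mathbb{R}$ is submodular if $F(S\cap T)+F(S\cup T)\le F(S)+F(T)$ for all $S,T\subseteq[n]$, and strictly submodular if $F(S)+F(S\cup\{i,j\})<F(S\cup\{i\})+F(S\cup\{j\})$ for all $S\subseteq[n]$ and distinct $i,j\in[n]\setminus S$. *)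

(* Defs.v *)
From HB Require Import structures.
From mathcomp Require Import all_boot all_order all_algebra.
From mathcomp Require Import reals.
Set Implicit Arguments. Unset Strict Implicit. Unset Printing Implicit Defensive.
Import Order.TTheory GRing.Theory Num.Theory.
Local Open Scope ring_scope.

(* A real (rank-one) valuation on a field K, given on nonzero elements
   (its value at 0 is irrelevant; conventionally +oo). *)
Definition is_valuation (R : realType) (K : fieldType) (v : K -> R) : Prop :=
  (forall x y : K, x != 0 -> y != 0 -> v (x * y) = v x + v y) /\
  (forall x y : K, x != 0 -> y != 0 -> x + y != 0 ->
      Num.min (v x) (v y) <= v (x + y)).

Definition nontrivial_valuation (R : realType) (K : fieldType) (v : K -> R) : Prop :=
  exists2 x, x != 0 :> K & v x != 0.

Definition value_group (R : realType) (K : fieldType) (v : K -> R) (g : R) : Prop :=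
  exists2 x, x != 0 :> K & v x = g.

Definition dense_in_R (R : realType) (G : R -> Prop) : Prop :=
  forall a b : R, a < b -> exists g, G g /\ a < g /\ g < b.

Definition submodular (R : realType) (n : nat) (F : {set 'I_n} -> R) : Prop :=
  forall S T : {set 'I_n}, F (S :&: T) + F (S :|: T) <= F S + F T.

Definition strictly_submodular (R : realType) (n : nat) (F : {set 'I_n} -> R)
  : Prop :=
  forall (S : {set 'I_n}) (i j : 'I_n), i != j -> i \notin S -> j \notin S ->
    F S + F (i |: (j |: S)) < F (i |: S) + F (j |: S).

Definition lam_act (R : realType) (n : nat) (lam : 'I_n.+1 -> R)
  (w : {set 'I_n} -> R) : {set 'I_n} -> R :=
  fun S => lam (inord #|S|) + w S.

(* Main.v *)
Require Import Defs.
From HB Require Import structures.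
From mathcomp Require Import all_boot all_order all_algebra.
From mathcomp Require Import reals.
From mathcomp Require Import ring lra.
Import Order.TTheory GRing.Theory Num.Theory.
Local Open Scope ring_scope.

Section Aux.
Variables (R : realType) (K : fieldType) (v : K -> R).
Hypothesis hv : is_valuation v.

Lemma vg0 : value_group v 0.
Proof.
exists 1; first exact: oner_neq0.
have := hv.1 1 1 (oner_neq0 _) (oner_neq0 _); rewrite mulr1 => h.
lra.
Qed.

Lemma vgD a b : value_group v a -> value_group v b -> value_group v (a + b).
Proof.
case=> x x0 <-; case=> y y0 <-; exists (x * y); first by rewrite mulf_neq0.
exact: hv.1.
Qed.

Lemma vgN a : value_group v a -> value_group v (- a).
Proof.
case=> x x0 <-; exists x^-1; first by rewrite invr_eq0.
have := hv.1 x x^-1 x0; rewrite invr_eq0 => /(_ x0).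

rewrite mulfV // => h.
have := hv.1 1 1 (oner_neq0 _) (oner_neq0 _); rewrite mulr1 => h1.
lra.
Qed.

Lemma vgMn a m : value_group v a -> value_group v (a *+ m).
Proof.
move=> ha; elim: m => [|m IH]; first by rewrite mulr0n; exact: vg0.
by rewrite mulrS; apply: vgD.
Qed.

Lemma key n (w : {set 'I_n} -> R) h : value_group v h -> 0 < h ->
  (forall (S : {set 'I_n}) (i j : 'I_n), i != j -> i \notin S -> j \notin S ->
     w S + w (i |: (j |: S)) < w (i |: S) + w (j |: S) + 2 * h) ->
  let lam := fun k : 'I_n.+1 => - ((k * k)%:R * h) in
  (forall k, value_group v (lam k)) /\ strictly_submodular (lam_act lam w).
Proof.
move=> hg hpos hw lam; split.
  by move=> k; apply: vgN; rewrite mulr_natl; apply: vgMn.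
move=> S i j ij iS jS; rewrite /lam_act /lam.
have cS := max_card (mem S); rewrite card_ord in cS.
have ijS : i \notin j |: S by rewrite in_setU1 negb_or ij iS.
have c2 := max_card (mem (i |: (j |: S))); rewrite card_ord in c2.
have ci := max_card (mem (i |: S)); rewrite card_ord in ci.
have cj := max_card (mem (j |: S)); rewrite card_ord in cj.
have E2 : #|i |: (j |: S)| = (#|S|).+2 by rewrite cardsU1 ijS cardsU1 jS.
have Ei : #|i |: S| = (#|S|).+1 by rewrite cardsU1 iS.
have Ej : #|j |: S| = (#|S|).+1 by rewrite cardsU1 jS.
rewrite !inordK ?ltnS //.
rewrite E2 Ei Ej !natrM !mulrSr.
have := hw S i j ij iS jS.
set x := (#|S|)%:R.
lra.
Qed.

End Aux.

Theorem lemma3p1 (R : realType) (K : fieldType) (v : K -> R)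
  (hv : is_valuation v) (hnt : nontrivial_valuation v)
  (n : nat) (w : {set 'I_n} -> R) :
  (exists lam : 'I_n.+1 -> R,
      (forall k, value_group v (lam k)) /\ strictly_submodular (lam_act lam w)) /\
  (submodular w -> dense_in_R (value_group v) ->
    forall eps : R, 0 < eps ->
      exists lam : 'I_n.+1 -> R,
        (forall k, value_group v (lam k)) /\ (forall k, `|lam k| < eps) /\
        strictly_submodular (lam_act lam w)).
Proof.
split.
  have [g gG gpos] : exists2 g, value_group v g & 0 < g.
    case: hnt => x x0 vx0.
    have [lt|gt] : v x < 0 \/ 0 < v x.
      by move: vx0; rewrite neq_lt => /orP.
    - exists (- v x); last by rewrite oppr_gt0.
      by apply: (@vgN R K v hv); exists x.
    - by exists (v x) => //; exists x.
  pose B := \sum_(A : {set 'I_n}) `|w A|.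
  have hB : forall A, `|w A| <= B.
    move=> A; rewrite /B (bigD1 A) //= lerDl.
    by apply: sumr_ge0 => X _; exact: normr_ge0.
  have B0 : 0 <= B by apply: le_trans (hB set0); exact: normr_ge0.
  pose M := Num.Def.archi_bound (2 * B / g).
  have hM : 2 * B / g < M%:R by apply: archi_boundP; apply: divr_ge0 => //; lra.
  have hM' : 2 * B < g * M%:R.
    by rewrite [g * _]mulrC -ltr_pdivrMr.
  have hpos : 0 < g *+ M.
    by rewrite -mulr_natr; lra.
  have hw : forall (S : {set 'I_n}) (i j : 'I_n), i != j -> i \notin S -> j \notin S ->
     w S + w (i |: (j |: S)) < w (i |: S) + w (j |: S) + 2 * (g *+ M).
    move=> S i j _ _ _.
    move: (hB S) (hB (i |: (j |: S))) (hB (i |: S)) (hB (j |: S)).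
    rewrite !ler_norml -mulr_natr.
    move=> /andP[? ?] /andP[? ?] /andP[? ?] /andP[? ?].
    lra.
  have [hl hr] := @key R K v hv n w _ (@vgMn R K v hv g M gG) hpos hw.
  by eexists; split; [exact: hl | exact: hr].
move=> sub dense eps eps0.
pose N := (n%:R + 1) ^+ 2 : R.
have N1 : 1 <= N.
  have n0 : (0:R) <= n%:R := ler0n _ _.
  rewrite /N expr2; apply: (@le_trans _ _ (1 * 1)); first by rewrite mulr1.
  apply: ler_pM => //; lra.
have epsN : 0 < eps / N by apply: divr_gt0 => //; lra.
have [h [hG [h0 hlt]]] := dense 0 (eps / N) epsN.
have hw : forall (S : {set 'I_n}) (i j : 'I_n), i != j -> i \notin S -> j \notin S ->
     w S + w (i |: (j |: S)) < w (i |: S) + w (j |: S) + 2 * h.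
  move=> S i j ij iS jS.
  have := sub (i |: S) (j |: S).
  have EI : (i |: S) :&: (j |: S) = S.
    apply/setP => x; rewrite !inE.
    case: (x \in S); rewrite ?orbT ?andbT //= !orbF.
    by case: eqP => // ->; rewrite (negbTE ij).
  have EU : (i |: S) :|: (j |: S) = i |: (j |: S).
    by apply/setP => x; rewrite !inE; case: (x == i); case: (x == j); case: (x \in S).
  rewrite EI EU; lra.
have [hl hr] := @key R K v hv n w _ hG h0 hw.
exists (fun k : 'I_n.+1 => - ((k * k)%:R * h)); split; first exact: hl.
split; last exact: hr.
move=> k; rewrite normrN ger0_norm; last by apply: mulr_ge0 => //; lra.
rewrite natrM.
have kn : (k%:R : R) <= n%:R by rewrite ler_nat -ltnS ltn_ord.
have k0 : (0 : R) <= k%:R by [].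
rewrite ltr_pdivlMr ?(lt_le_trans ltr01) // in hlt.
apply: le_lt_trans hlt; rewrite [_ * h]mulrC; apply: ler_wpM2l; first lra.
rewrite /N expr2; apply: ler_pM => //; lra.
Qed.
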